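(* Let $F$ be an unsatisfiable CNF formula over variables $X \cup Y \cup Z$ (pairwise disjoint), $X=\{x_1,\ldots,x_n\}$, such that for every truth assignment to $X \cup Y$ the values of the variables in $Z$ are obtained from it by unit propagation in $F$. Let $c_X(F) = \{\gamma \vee \neg a \vee \neg b \mid \gamma \in F\} \cup \{\neg x_i \vee v_i \mid 1\le i\le n\} \cup \{x_i \vee v_i \mid 1\le i\le n\} \cup \{\neg v_1 \vee \cdots \vee \neg v_n \vee a\} \cup \{\neg v_1 \vee \cdots \vee \neg v_n \vee b\}$, where $a,b,v_1,\ldots,v_n$ are new variables. Then, with branching restricted to the variables in $X \cup Y$, there exists a minimum-size DPLL-Mono search tree of $c_X(F)$ consisting of a complete tree over $X$ (every path from the root to an empty subtree contains exactly one node labelled by each variable of $X$) in which every empty subtree is replaced by a tree whose nodes are labelled by variables of $Y$.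
   Context: A CNF formula is a finite set of clauses; the empty clause is unsatisfiable. For a partial assignment $I$ (set of literals), $F|I$ is obtained by deleting clauses containing a literal true under $I$ and deleting false literals from remaining clauses. $Var(F)$ is the set of variables of $F$. A binary tree is empty $()$ or a triple $(x~T_1~T_2)$; its size is its number of nodes. $U(F)$ denotes the result of exhaustively applying unit propagation to $F$ (a unit clause $l$ forces the restriction by $\{l\}$). For a set $B$ of variables, a DPLL-Mono search tree (DMST) of $F$ with branching restricted to $B$ is: $()$ if $U(F)$ contains the empty clause; otherwise $(x~T_1~T_2)$ with $x \in B \cap Var(U(F))$, $T_1$ a DMST of $U(F|\{\neg x\})$ and $T_2$ a DMST of $U(F|\{x\})$, both with branching restricted to $B$. *)

(* Defs.v *)
From mathcomp Require Import all_boot.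
Set Implicit Arguments. Unset Strict Implicit. Unset Printing Implicit Defensive.

(* Variables are natural numbers; a literal is (variable, polarity),
   polarity true = positive literal x, false = negative literal ~x. *)
Definition lit := (nat * bool)%type.
Definition clause := seq lit.
Definition cnf := seq clause.

Definition neg (l : lit) : lit := (l.1, ~~ l.2).

Definition restrict (F : cnf) (I : seq lit) : cnf :=
  [seq [seq l <- C | neg l \notin I] | C <- F & ~~ has (fun l => l \in I) C].

Definition vars (F : cnf) : seq nat := flatten [seq [seq l.1 | l <- C] | C <- F].

Definition is_unit (C : clause) : bool := size (undup C) == 1.

(* Exhaustive unit propagation: repeatedly pick the first unit clause {l}
   and restrict by {l}; each step removes at least the unit clause, so
   size F steps suffice. *)
Fixpoint up_fuel (n : nat) (F : cnf) : cnf :=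
  match n with
  | 0 => F
  | n'.+1 =>
      match [seq C <- F | is_unit C] with
      | [::] => F
      | C :: _ => up_fuel n' (restrict F [:: head (0, true) C])
      end
  end.



Definition UP (F : cnf) : cnf := up_fuel (size F) F.

Inductive tree : Type := Leaf | Node of nat & tree & tree.

Fixpoint tree_size (T : tree) : nat :=
  match T with Leaf => 0 | Node _ T1 T2 => (tree_size T1 + tree_size T2).+1 end.

Inductive dmst (B : seq nat) : cnf -> tree -> Prop :=
| dmst_leaf F : [::] \in UP F -> dmst B F Leaf
| dmst_node F x T1 T2 :
    [::] \notin UP F -> x \in B -> x \in vars (UP F) ->
    dmst B (UP (restrict F [:: (x, false)])) T1 ->
    dmst B (UP (restrict F [:: (x, true)])) T2 ->
    dmst B F (Node x T1 T2).

Inductive up_derived (F : cnf) (I : seq lit) : lit -> Prop :=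
| upd_init l : l \in I -> up_derived F I l
| upd_step (C : clause) l : C \in F -> l \in C ->
    (forall l', l' \in C -> l' != l -> up_derived F I (neg l')) ->
    up_derived F I l.

Definition satisfies (alpha : nat -> bool) (F : cnf) : bool :=
  all (fun C => has (fun l => alpha l.1 == l.2) C) F.

Definition unsat (F : cnf) : Prop := forall alpha, ~~ satisfies alpha F.

Definition cX (F : cnf) (X : seq nat) (a b : nat) (vs : seq nat) : cnf :=
  [seq C ++ [:: (a, false); (b, false)] | C <- F]
  ++ [seq [:: (p.1, false); (p.2, true)] | p <- zip X vs]
  ++ [seq [:: (p.1, true); (p.2, true)] | p <- zip X vs]
  ++ [:: rcons [seq (v, false) | v <- vs] (a, true);
         rcons [seq (v, false) | v <- vs] (b, true)].

Fixpoint labels_in (Y : seq nat) (T : tree) : bool :=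
  match T with
  | Leaf => true
  | Node x T1 T2 => (x \in Y) && labels_in Y T1 && labels_in Y T2
  end.

Fixpoint xy_shape (S Y : seq nat) (T : tree) : bool :=
  match S with
  | [::] => labels_in Y T
  | _ :: _ =>
      match T with
      | Leaf => false
      | Node x T1 T2 => (x \in S) && xy_shape (rem x S) Y T1 && xy_shape (rem x S) Y T2
      end
  end.

(* Main.v *)
Require Import Defs.
From mathcomp Require Import all_boot.
From Stdlib Require Import Classical ClassicalEpsilon.
From mathcomp Require Import zify.
Set Implicit Arguments. Unset Strict Implicit. Unset Printing Implicit Defensive.

Lemma negK l : neg (neg l) = l.
Proof. by case: l => x []. Qed.

Lemma neg_neq l : (neg l == l) = false.
Proof. by case: l => x []; rewrite /neg /= xpair_eqE eqxx. Qed.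

Lemma neg_inj l m : neg l = neg m -> l = m.
Proof. by move=> H; rewrite -(negK l) H negK. Qed.

Lemma same_var l m : m.1 = l.1 -> m = l \/ m = neg l.
Proof.
case: l m => x [] [y []] /= ->; rewrite /neg /=; auto.
Qed.

Section Generic.
Variable G : cnf.
Notation D := (up_derived G).

Lemma D_mono S S' : {subset S <= S'} -> forall l, D S l -> D S' l.
Proof.
move=> sub l; elim=> [m Hm | C m HC Hm _ IH].
- by apply: upd_init; apply: sub.
- exact: (upd_step HC Hm IH).
Qed.

Lemma D_trans S S' : (forall l, l \in S' -> D S l) -> forall l, D S' l -> D S l.
Proof.
move=> sub l; elim=> [m Hm | C m HC Hm _ IH].
- exact: sub.
- exact: (upd_step HC Hm IH).
Qed.

Definition consis S := forall l, D S l -> D S (neg l) -> False.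

Definition occ S x := exists2 C, C \in G &
  ((forall m, m \in C -> ~ D S m) /\ exists2 m, m \in C & (m.1 = x /\ ~ D S (neg m))).

Definition Deq S S' := forall l, D S l <-> D S' l.

Lemma Deq_rcons S S' l : Deq S S' -> Deq (rcons S l) (rcons S' l).
Proof.
move=> E; suff H : forall S S', Deq S S' -> forall m, D (rcons S l) m -> D (rcons S' l) m.
  by move=> m; split; apply: H => // k; rewrite E.
move=> {}S {}S' {}E; apply: D_trans => k; rewrite mem_rcons inE => /orP [/eqP->|Hk].
  by apply: upd_init; rewrite mem_rcons mem_head.
apply: (@D_mono S'); first by move=> j; rewrite mem_rcons inE orbC => ->.
by apply/E; apply: upd_init.
Qed.

Lemma Deq_mem S S' : S =i S' -> Deq S S'.
Proof. by move=> E l; split; apply: D_mono => k; rewrite E. Qed.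

Lemma Deq_sym S S' : Deq S S' -> Deq S' S.
Proof. by move=> E l; split => /E. Qed.

Lemma cons_Deq S S' : Deq S S' -> consis S -> consis S'.
Proof. by move=> E c l /E H1 /E H2; exact: c H1 H2. Qed.

Lemma occ_Deq S S' x : Deq S S' -> occ S x -> occ S' x.
Proof.
move=> E [C HC [H1 [m Hm [H2 H3]]]]; exists C => //; split.
  by move=> k /H1 H /E.
by exists m => //; split => // /E.
Qed.

Lemma occ_anti S S' x : {subset S <= S'} -> occ S' x -> occ S x.
Proof.
move=> sub [C HC [H1 [m Hm [H2 H3]]]]; exists C => //; split.
  by move=> k /H1 H /(D_mono sub).
by exists m => //; split => // /(D_mono sub).
Qed.

Lemma cons_anti S S' : {subset S <= S'} -> consis S' -> consis S.
Proof. by move=> sub c l /(D_mono sub) H1 /(D_mono sub) H2; exact: c H1 H2. Qed.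

Lemma occ_unassigned S x : occ S x -> forall b, ~ D S (x, b).
Proof.
move=> [C HC [H1 [m Hm [H2 H3]]]] b.
have /same_var [->|->] : (x, b).1 = m.1 by rewrite H2.
  exact: H1.
done.
Qed.

Variable B : seq nat.

Inductive dm : seq lit -> tree -> Prop :=
| dm_leaf S : ~ consis S -> dm S Leaf
| dm_node S x T1 T2 : consis S -> x \in B -> occ S x ->
    dm (rcons S (x, false)) T1 -> dm (rcons S (x, true)) T2 -> dm S (Node x T1 T2).

Lemma dm_Deq T S S' : Deq S S' -> dm S T -> dm S' T.
Proof.
move=> E H; elim: H S' E => {S T} [S nc | S x T1 T2 c xB o _ IH1 _ IH2] S' E.
  by apply: dm_leaf => c; apply: nc; apply: cons_Deq c; apply: Deq_sym.
apply: dm_node => //; first exact: cons_Deq c.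
  exact: occ_Deq o.
  by apply: IH1; apply: Deq_rcons.
by apply: IH2; apply: Deq_rcons.
Qed.

Lemma dm_mem T S S' : S =i S' -> dm S T -> dm S' T.
Proof. by move=> E; apply: dm_Deq; apply: Deq_mem. Qed.

Lemma dm_nc S T : dm S T -> ~ consis S -> T = Leaf.
Proof. by case=> // S0 x T1 T2 c. Qed.

Lemma dm_leaf_inv S : dm S Leaf -> ~ consis S.
Proof. by move=> H; inversion H. Qed.

Lemma dm_node_inv S x T1 T2 : dm S (Node x T1 T2) -> [/\ consis S, x \in B, occ S x,
    dm (rcons S (x, false)) T1 & dm (rcons S (x, true)) T2].
Proof. by move=> H; inversion H. Qed.

Lemma rcons_swap (S : seq lit) (l1 l2 : lit) : rcons (rcons S l1) l2 =i rcons (rcons S l2) l1.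
Proof. move=> k; rewrite !mem_rcons !inE !mem_rcons !inE. by case: (k == l1); case: (k == l2); case: (k \in S). Qed.

Section Irr.
Variables (S : seq lit) (l : lit).
Hypothesis cS : consis S.
Hypothesis nl1 : ~ D S l.
Hypothesis nl2 : ~ D S (neg l).
Hypothesis nocc : forall C, C \in G -> (forall m, m \in C -> ~ D S m) ->
  forall m, m \in C -> m.1 <> l.1.

Lemma irr_unassigned S' : {subset S <= S'} -> (forall m, m \in S' -> m \in S \/ m.1 <> l.1) ->
  consis S' -> forall m, D S' m -> m.1 = l.1 -> False.
Proof.
move=> sub sub2 c m Dm Em.
have Hm : ~ D S m by case: (same_var Em) => ->.
case: Dm Hm Em => [m0 Hm0 | C m0 HC Hm0 Hoth] Hm Em.
  by case: (sub2 _ Hm0) => // /upd_init.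
case: (classic (exists2 j, j \in C & D S j)) => [[j jC Dj]|].
  case: (eqVneq j m0) => [E|jm]; first by rewrite E in Dj.
  by apply: (c j); [apply: D_mono Dj|apply: Hoth].
move=> H; apply: (nocc HC _ Hm0 Em) => j jC Dj; apply: H; by exists j.
Qed.

Lemma irr_closed S' : {subset S <= S'} -> consis S' -> forall m, D (rcons S' l) m -> D S' m \/ m = l.
Proof.
move=> sub c m; elim=> [k | C k HC Hk Hoth IH].
  by rewrite mem_rcons inE => /orP [/eqP->|/upd_init]; auto.
case: (classic (forall l', l' \in C -> l' != k -> D S' (neg l'))) => [H|].
  by left; apply: (upd_step HC Hk H).
move=> /not_all_ex_not [k' H0]; have [k'C H1] := imply_to_and _ _ H0; have [k'k nD] := imply_to_and _ _ H1.
case: (IH k' k'C k'k) => // Ek'.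
have k'v : k'.1 = l.1 by rewrite -Ek'.
case: (classic (exists2 j, j \in C & D S j)) => [[j jC Dj]|H]; last first.
  by exfalso; apply: (nocc HC _ k'C k'v) => j jC Dj; apply: H; exists j.
case: (eqVneq j k) => [E|jk]; first by left; rewrite -E; apply: D_mono Dj.
case: (IH j jC jk) => [Dn|En].
  by exfalso; apply: (c j) => //; apply: D_mono Dj.
by exfalso; apply: nl2; rewrite -En negK.
Qed.

Lemma irr_cons S' : {subset S <= S'} -> (forall m, m \in S' -> m \in S \/ m.1 <> l.1) ->
  consis S' -> consis (rcons S' l).
Proof.
move=> sub sub2 c m /(irr_closed sub c) [H1|->] /(irr_closed sub c) [H2|H2].
- exact: c H1 H2.
- by apply: (irr_unassigned sub sub2 c H1); rewrite -H2.
- by apply: (irr_unassigned sub sub2 c H2).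
- by move: (neg_neq l); rewrite H2 eqxx.
Qed.

Lemma irr_dm T : forall S', {subset S <= S'} -> (forall m, m \in S' -> m \in S \/ m.1 <> l.1) ->
  dm (rcons S' l) T -> dm S' T.
Proof.
elim: T => [|x T1 IH1 T2 IH2] S' sub sub2 H.
  by apply: dm_leaf => c; apply: (dm_leaf_inv H); apply: irr_cons.
have sub' : {subset S' <= rcons S' l} by move=> k; rewrite mem_rcons inE orbC => ->.
case/dm_node_inv: H => c xB o H1 H2.
have xl : x <> l.1.
  move=> E; have := occ_unassigned (b:=l.2) o; apply; rewrite E; apply: upd_init.
  by rewrite mem_rcons -surjective_pairing mem_head.
apply: dm_node => //.
- exact: cons_anti c.
- exact: occ_anti o.
- apply: IH1.
  + by move=> k /sub; rewrite mem_rcons inE orbC => ->.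
  + by move=> k; rewrite mem_rcons inE => /orP [/eqP->|/sub2] //; right.
  by apply: dm_mem H1; apply: rcons_swap.
- apply: IH2.
  + by move=> k /sub; rewrite mem_rcons inE orbC => ->.
  + by move=> k; rewrite mem_rcons inE => /orP [/eqP->|/sub2] //; right.
  by apply: dm_mem H2; apply: rcons_swap.
Qed.
End Irr.

End Generic.

Lemma restrict_nilI (H : cnf) : restrict H [::] = H.
Proof.
rewrite /restrict; elim: H => //= C H IH.
have -> : has (fun l => l \in [::]) C = false by elim: C.
rewrite /= IH; congr (_ :: _); by elim: C => //= l C ->.
Qed.

Lemma mem_restrict (H : cnf) (I : seq lit) C' :
  reflect (exists2 C, C \in H & (~~ has (fun l => l \in I) C /\ C' = [seq l <- C | neg l \notin I]))
          (C' \in restrict H I).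
Proof.
apply: (iffP mapP) => [[C] | [C HC [H1 ->]]].
  by rewrite mem_filter => /andP [H1 H2] ->; exists C.
by exists C => //; rewrite mem_filter H1.
Qed.

Lemma restrict_rcons (H : cnf) (S : seq lit) l : neg l \notin S ->
  restrict (restrict H S) [:: l] = restrict H (rcons S l).
Proof.
move=> nl; rewrite /restrict; elim: H => //= C H IH.
case hS: (has (fun l0 => l0 \in S) C) => /=.
  have -> : has (fun l0 => l0 \in rcons S l) C.
    by apply: sub_has hS => k; rewrite mem_rcons inE orbC => ->.
  by rewrite /= IH.
have -> : has (fun l0 => l0 \in [:: l]) [seq l0 <- C | neg l0 \notin S] = has (fun l0 => l0 \in rcons S l) C.
  apply/idP/idP => /hasP [k kC Hk]; apply/hasP.
    move: kC; rewrite mem_filter => /andP [_ kC]; exists k => //.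
    by move: Hk; rewrite inE => /eqP ->; rewrite mem_rcons mem_head.
  move: Hk; rewrite mem_rcons inE => /orP [/eqP Ek|kS]; last by move/negbT/hasPn: hS => /(_ k kC); rewrite kS.
  exists k; last by rewrite Ek mem_head.
  by rewrite mem_filter kC Ek nl.
case: ifP => _ //=; rewrite IH; congr (_ :: _).
rewrite -filter_predI; apply: eq_filter => k /=.
by rewrite mem_rcons !inE negb_or andbC.
Qed.

Lemma restrict_eq_mem (H : cnf) (I J : seq lit) : I =i J -> restrict H I = restrict H J.
Proof.
move=> E; rewrite /restrict; elim: H => //= C H IH.
have -> : has (fun l => l \in I) C = has (fun l => l \in J) C by apply: eq_has => k; rewrite E.
case: ifP => _ //=; rewrite IH; congr (_ :: _); apply: eq_filter => k; by rewrite E.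
Qed.

Lemma empty_restrict (H : cnf) I : [::] \in H -> [::] \in restrict H I.
Proof. by move=> H0; apply/mem_restrict; exists [::]. Qed.

Lemma empty_up n (H : cnf) : [::] \in H -> [::] \in up_fuel n H.
Proof.
elim: n H => //= n IH H H0; case: [seq C <- H | is_unit C] => // C _.
by apply: IH; apply: empty_restrict.
Qed.

Lemma size_restrict_lt (H : cnf) l C : C \in H -> l \in C -> size (restrict H [:: l]) < size H.
Proof.
move=> HC lC; rewrite /restrict size_map size_filter -(count_predC (fun C0 => ~~ has (fun l0 => l0 \in [:: l]) C0) H).
rewrite -addn1 leq_add2l -has_count; apply/hasP; exists C => //=.
by rewrite negbK; apply/hasP; exists l => //; rewrite mem_head.
Qed.

Lemma mem_vars (H : cnf) x : reflect (exists2 C, C \in H & exists2 l, l \in C & l.1 = x) (x \in vars H).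
Proof.
apply: (iffP flattenP) => [[s /mapP [C HC ->] /mapP [l lC ->]] | [C HC [l lC <-]]].
  by exists C => //; exists l.
by exists [seq l0.1 | l0 <- C]; [apply: map_f | apply: map_f].
Qed.

Lemma unit_all (C : clause) : is_unit C -> forall x, x \in C -> x = head (0, true) C.
Proof.
rewrite /is_unit; case E: (undup C) => [|h [|h' t]] // _.
have hd : forall x, x \in C -> x = h by move=> x; rewrite -mem_undup E inE => /eqP.
case: C E hd => [|c C] //= _ hd x /hd ->; symmetry; apply: hd; exact: mem_head.
Qed.

Lemma is_unit_intro (s : clause) m : (forall x, x \in s -> x = m) -> m \in s -> is_unit s.
Proof.
move=> H ms; rewrite /is_unit.
have : {subset undup s <= [:: m]} by move=> x; rewrite mem_undup => /H ->; exact: mem_head.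
move/(uniq_leq_size (undup_uniq s)) => /= H1.
have : 0 < size (undup s) by case E: (undup s) => //; move: ms; rewrite -mem_undup E.
by rewrite eqn_leq H1 => ->.
Qed.

Definition scons (S : seq lit) := forall l, l \in S -> neg l \notin S.

Section UPspec.
Variable G : cnf.
Hypothesis Gne : forall C, C \in G -> C != [::].
Notation D := (up_derived G).

Lemma stable S : scons S -> [seq C <- restrict G S | is_unit C] = [::] ->
  ([::] \in restrict G S -> ~ consis G S) /\ ([::] \notin restrict G S -> forall m, D S m -> m \in S).
Proof.
move=> sc nu; split.
  move/mem_restrict => [C HC [H1 H2]] c.
  case: C HC H1 H2 => [|x C] HC H1 H2; first by move: (Gne HC).
  have allneg : forall l, l \in x :: C -> neg l \in S.
    move=> l lC; apply/negPn/negP => nl.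
    have : l \in [seq l0 <- x :: C | neg l0 \notin S] by rewrite mem_filter nl lC.
    by rewrite -H2.
  apply: (c x).
    apply: (upd_step HC (mem_head _ _)) => l' l'C _; apply: upd_init; exact: allneg.
  by apply: upd_init; apply: allneg; exact: mem_head.
move=> ne m; elim=> // C k HC kC _ IH.
case: (boolP (has (fun l => l \in S) C)) => [/hasP [j jC jS]|hn].
  case: (eqVneq j k) => [<-|jk] //.
  by move: (sc _ jS); rewrite (IH j jC jk).
case: (boolP (neg k \in S)) => nk.
  exfalso; move/negP: ne; apply; apply/mem_restrict; exists C => //; split => //.
  symmetry; apply/eqP; rewrite -(negbK (_ == _)) -has_filter; apply/hasPn => l lC /=.
  by case: (eqVneq l k) => [->|lk]; [rewrite nk | rewrite (IH l lC lk)].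
exfalso.
have : is_unit [seq l <- C | neg l \notin S].
  apply: (is_unit_intro (m:=k)); last by rewrite mem_filter nk.
  move=> x; rewrite mem_filter => /andP [nx xC]; apply/eqP; apply/negPn/negP => xk.
  by rewrite (IH x xC xk) in nx.
have : [seq l <- C | neg l \notin S] \in restrict G S by apply/mem_restrict; exists C.
move=> Hin Hu; move: nu => /eqP; rewrite -(negbK (_ == _)) -has_filter => /hasP; apply.
by exists [seq l <- C | neg l \notin S].
Qed.

Lemma cons_of_closed S : scons S -> (forall m, D S m -> m \in S) -> consis G S.
Proof. by move=> sc cl l /cl H1 /cl H2; move: (sc _ H1); rewrite H2. Qed.

Lemma up_spec n S : scons S -> size (restrict G S) <= n ->
  (consis G S -> exists2 S1, (forall l, l \in S1 <-> D S l) & up_fuel n (restrict G S) = restrict G S1)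
  /\ (~ consis G S -> [::] \in up_fuel n (restrict G S)).
Proof.
have base : forall S, scons S -> [seq C <- restrict G S | is_unit C] = [::] ->
  (consis G S -> exists2 S1, (forall l, l \in S1 <-> D S l) & restrict G S = restrict G S1)
  /\ (~ consis G S -> [::] \in restrict G S).
  move=> S0 sc nu; have [st1 st2] := stable sc nu.
  case: (boolP ([::] \in restrict G S0)) => e.
    by split => // /(st1 e).
  split=> [c|nc]; first by exists S0 => // l; split => [/upd_init|/(st2 e)].
  by exfalso; apply: nc; apply: cons_of_closed => //; apply: st2.
elim: n S => [|n IH] S sc sz.
  rewrite leqn0 size_eq0 in sz; rewrite /= (eqP sz) -(eqP sz).
  by apply: base => //; rewrite (eqP sz).
rewrite /=; case E: [seq C <- restrict G S | is_unit C] => [|C rest]; first exact: base.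
have : C \in [seq C <- restrict G S | is_unit C] by rewrite E mem_head.
rewrite mem_filter => /andP [Cu /mem_restrict [C0 HC0 [nS EC]]].
set l := head (0, true) C.
have lC : l \in C.
  by rewrite /l; move: Cu; rewrite /is_unit; case: (C) => //= c C' _; exact: mem_head.
have lC0 : l \in C0 by move: lC; rewrite EC mem_filter => /andP [].
have nlS : neg l \notin S by move: lC; rewrite EC mem_filter => /andP [].
have lS : l \notin S by apply/negP => lS; move/negP: nS; apply; apply/hasP; exists l.
rewrite restrict_rcons //.
have sc' : scons (rcons S l).
  move=> k; rewrite !mem_rcons !inE => /orP [/eqP->|kS].
    by rewrite neg_neq.
  rewrite negb_or (sc _ kS) andbT; apply/negP => /eqP Ek.
  by move: nlS; rewrite -Ek negK kS.
have Cin : C \in restrict G S by apply/mem_restrict; exists C0.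
have sz' : size (restrict G (rcons S l)) <= n.
  rewrite -ltnS; apply: leq_trans sz; rewrite -restrict_rcons //.
  exact: (size_restrict_lt Cin lC).
have dl : D S l.
  apply: (upd_step HC0 lC0) => l' l'C0 l'l; apply: upd_init.
  apply/negPn/negP => nl'; move/eqP: l'l; apply.
  by rewrite /l; apply: (unit_all Cu); rewrite EC mem_filter nl' l'C0.
have dq : Deq G S (rcons S l).
  move=> k; split; first by apply: D_mono => j; rewrite mem_rcons inE orbC => ->.
  apply: D_trans => j; rewrite mem_rcons inE => /orP [/eqP->|/upd_init] //.
have [IH1 IH2] := IH _ sc' sz'.
split=> [c|nc].
  have [S1 H1 H2] := IH1 (cons_Deq dq c); exists S1 => // k; rewrite H1; exact: iff_sym (dq k).
by apply: IH2 => c; apply: nc; apply: cons_Deq c; apply: Deq_sym.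
Qed.

Lemma up_main S : scons S ->
  (consis G S -> exists2 S1, (forall l, l \in S1 <-> D S l) & UP (restrict G S) = restrict G S1)
  /\ (~ consis G S -> [::] \in UP (restrict G S)).
Proof. by move=> sc; apply: up_spec. Qed.

Lemma closed_noempty S S1 : consis G S -> (forall l, l \in S1 <-> D S l) -> [::] \notin restrict G S1.
Proof.
move=> c H; apply/negP => /mem_restrict [C HC [H1 H2]].
case: C HC H1 H2 => [|x C] HC H1 H2; first by move: (Gne HC).
have allneg : forall l, l \in x :: C -> neg l \in S1.
  move=> l lC; apply/negPn/negP => nl.
  have : l \in [seq l0 <- x :: C | neg l0 \notin S1] by rewrite mem_filter nl lC.
  by rewrite -H2.
apply: (c x).
  apply: (upd_step HC (mem_head _ _)) => l' l'C _; apply/H; exact: allneg.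
by apply/H; apply: allneg; exact: mem_head.
Qed.

Lemma vars_occ S S1 x : (forall l, l \in S1 <-> D S l) -> (x \in vars (restrict G S1) <-> occ G S x).
Proof.
move=> H; split.
  move/mem_vars => [C' /mem_restrict [C HC [H1 ->]] [m]].
  rewrite mem_filter => /andP [nm mC] mx.
  exists C => //; split.
    by move=> k kC /H kS; move/negP: H1; apply; apply/hasP; exists k.
  by exists m => //; split => // /H; apply/negP.
move=> [C HC [H1 [m mC [mx nm]]]]; apply/mem_vars.
exists [seq l <- C | neg l \notin S1].
  apply/mem_restrict; exists C => //; split => //.
  by apply/hasPn => k kC; apply/negP => /H; apply: H1.
by exists m => //; rewrite mem_filter mC andbT; apply/negP => /H.
Qed.

End UPspec.

Lemma dmst_empty B H T : [::] \in H -> (dmst B H T <-> T = Leaf).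
Proof.
move=> e; split => [|->]; last by apply: dmst_leaf; apply: empty_up.
move=> D0; inversion D0 as [|F x T1 T2 ne]; first by [].
by exfalso; move/negP: ne; apply; exact: empty_up.
Qed.

Lemma scons_child G S x b : scons S -> occ G S x -> scons (rcons S (x, b)).
Proof.
move=> sc o k; rewrite !mem_rcons !inE => /orP [/eqP->|kS].
  rewrite neg_neq /=; apply/negP => H; apply: (occ_unassigned (b:=~~b) o); exact: upd_init.
rewrite negb_or (negbTE (sc _ kS)) andbT; apply/eqP => E.
apply: (occ_unassigned (b:=~~b) o); apply: upd_init.
by rewrite -[(x, ~~b)]/(neg (x,b)) -E negK.
Qed.

Section Equiv.
Variable G : cnf.
Hypothesis Gne : forall C, C \in G -> C != [::].
Variable B : seq nat.

Lemma dmst_dm T : forall S, scons S -> (dmst B (restrict G S) T <-> dm G B S T).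
Proof.
elim: T => [|x T1 IH1 T2 IH2] S sc; have [U1 U2] := up_main Gne sc.
  split=> [H|H].
    inversion H as [F0 e|]; apply: dm_leaf => c; have [S1 E1 E2] := U1 c.
    by move: (closed_noempty Gne c E1); rewrite -E2 e.
  apply: dmst_leaf; apply: U2; exact: (dm_leaf_inv H).
case: (classic (consis G S)) => c; last first.
  split=> H; last by move: (dm_nc H c).
  by inversion H as [|F0 x0 T10 T20 ne]; rewrite (U2 c) in ne.
have [S1 E1 E2] := U1 c.
have child : forall b Tc, occ G S x ->
    (forall S', scons S' -> (dmst B (restrict G S') Tc <-> dm G B S' Tc)) ->
    (dmst B (UP (restrict (restrict G S) [:: (x, b)])) Tc <-> dm G B (rcons S (x, b)) Tc).
  move=> b Tc o IH; rewrite restrict_rcons; last first.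
    by apply/negP => H; apply: (occ_unassigned (b:=~~b) o); exact: upd_init.
  have sc' := scons_child (b:=b) sc o.
  have [V1 V2] := up_main Gne sc'.
  case: (classic (consis G (rcons S (x, b)))) => c'.
    have [S2 F1 F2] := V1 c'; rewrite F2.
    have sc2 : scons S2.
      by move=> k /F1 Hk; apply/negP => /F1 Hk'; exact: c' Hk Hk'.
    rewrite IH //; split; apply: dm_Deq => k; split.
    - apply: D_trans => j /F1 //.
    - apply: D_mono => j Hj; apply/F1; exact: upd_init.
    - apply: D_mono => j Hj; apply/F1; exact: upd_init.
    - apply: D_trans => j /F1 //.
  rewrite dmst_empty; last exact: V2.
  by split=> [->|H]; [apply: dm_leaf | exact: dm_nc H c'].
split=> H.
  inversion H; subst.
  have o : occ G S x by apply/(vars_occ x E1); rewrite -E2.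
  apply: dm_node => //.
    by apply/(child _ _ o IH1).
  by apply/(child _ _ o IH2).
case/dm_node_inv: H => _ xB o H1 H2.
apply: dmst_node => //.
- by rewrite E2; apply: closed_noempty E1.
- by rewrite E2; apply/(vars_occ x E1).
- by apply/(child _ _ o IH1).
by apply/(child _ _ o IH2).
Qed.
End Equiv.

Lemma uniq_disj (T : eqType) (s1 s2 : seq T) x : uniq (s1 ++ s2) -> x \in s1 -> x \notin s2.
Proof.
rewrite cat_uniq => /and3P [_ /hasPn H _] xs1; apply/negP => xs2.
by move: (H x xs2); rewrite /= xs1.
Qed.

Section CX.
Variables (F : cnf) (X Y Z : seq nat) (a b : nat) (vs : seq nat).
Hypothesis Hu : uniq (X ++ Y ++ Z ++ a :: b :: vs).
Hypothesis Hsz : size vs = size X.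
Notation G := (cX F X a b vs).
Notation D := (up_derived (cX F X a b vs)).
Notation W := (X ++ Y ++ Z).

Lemma HuW : uniq (W ++ a :: b :: vs). Proof. by rewrite -!catA. Qed.
Lemma uW : uniq W. Proof. by have := HuW; rewrite cat_uniq => /and3P []. Qed.
Lemma uL : uniq (a :: b :: vs). Proof. by have := HuW; rewrite cat_uniq => /and3P []. Qed.
Lemma uX : uniq X. Proof. by have := uW; rewrite cat_uniq => /and3P []. Qed.
Lemma uvs : uniq vs. Proof. by have := uL => /= /and3P [_ _]. Qed.
Lemma fab : a != b. Proof. by have := uL => /= /and3P [H _ _]; apply/eqP => E; move: H; rewrite E mem_head. Qed.
Lemma fav : a \notin vs. Proof. by have := uL => /= /and3P [H _ _]; move: H; rewrite inE negb_or => /andP []. Qed.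
Lemma fbv : b \notin vs. Proof. by have := uL => /= /and3P []. Qed.
Lemma Wnot x : x \in W -> [/\ x != a, x != b & x \notin vs].
Proof.
move=> xW; have := uniq_disj HuW xW; rewrite !inE !negb_or => /and3P [H1 H2 H3].
by split.
Qed.
Lemma XW x : x \in X -> x \in W. Proof. by rewrite mem_cat => ->. Qed.
Lemma XYW x : x \in X ++ Y -> x \in W. Proof. by rewrite catA [x \in (X ++ Y) ++ Z]mem_cat => ->. Qed.
Lemma YnotX y : y \in Y -> y \notin X.
Proof. move=> yY; apply/negP => yX; have := uniq_disj uW yX; by rewrite mem_cat yY. Qed.
Lemma ZnotXY z : z \in Z -> z \notin X ++ Y.
Proof.
move=> zZ; rewrite mem_cat negb_or; apply/andP; split; apply/negP => H.
  by have := uniq_disj uW H; rewrite mem_cat zZ orbT.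
have : uniq (Y ++ Z) by have := uW; rewrite cat_uniq => /and3P [].
by move/uniq_disj => /(_ z H); rewrite zZ.
Qed.

Lemma zipP p : reflect (exists2 i, i < size X & p = (nth 0 X i, nth 0 vs i)) (p \in zip X vs).
Proof.
apply: (iffP idP) => [pz | [i iX ->]].
  exists (index p (zip X vs)).
    by move: pz; rewrite -index_mem size_zip Hsz minnn.
  by rewrite -nth_zip // nth_index.
rewrite -nth_zip //; apply: mem_nth; by rewrite size_zip Hsz minnn.
Qed.

Lemma zip_mem x v : (x, v) \in zip X vs -> x \in X /\ v \in vs.
Proof.
move/zipP => [i iX [-> ->]]; split; apply: mem_nth => //; by rewrite Hsz.
Qed.

Lemma zip_ex x : x \in X -> exists v, (x, v) \in zip X vs.
Proof.
move=> xX; exists (nth 0 vs (index x X)); apply/zipP; exists (index x X); first by rewrite index_mem.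
by rewrite nth_index.
Qed.

Lemma zip_inj1 x x' v : (x, v) \in zip X vs -> (x', v) \in zip X vs -> x = x'.
Proof.
move=> /zipP [i iX [-> E1]] /zipP [j jX [-> E2]].
have : nth 0 vs i == nth 0 vs j by rewrite -E1 -E2.
by rewrite nth_uniq ?Hsz ?uvs // => /eqP ->.
Qed.

Lemma cX_cases C : C \in G ->
  [\/ (exists2 g, g \in F & C = g ++ [:: (a, false); (b, false)]),
      (exists2 p, p \in zip X vs & C = [:: (p.1, false); (p.2, true)]),
      (exists2 p, p \in zip X vs & C = [:: (p.1, true); (p.2, true)])
      | C = rcons [seq (v, false) | v <- vs] (a, true)
        \/ C = rcons [seq (v, false) | v <- vs] (b, true)].
Proof.
rewrite /cX !mem_cat !inE => /orP [/mapP [g gF ->]|/orP [/mapP [p pz ->]|/orP [/mapP [p pz ->]|/orP [/eqP ->|/eqP ->]]]].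
- by apply: Or41; exists g.
- by apply: Or42; exists p.
- by apply: Or43; exists p.
- by apply: Or44; left.
- by apply: Or44; right.
Qed.

Lemma cX_in1 g : g \in F -> g ++ [:: (a, false); (b, false)] \in G.
Proof. by move=> gF; rewrite /cX mem_cat; apply/orP; left; apply: map_f. Qed.
Lemma cX_in2 p : p \in zip X vs -> [:: (p.1, false); (p.2, true)] \in G.
Proof. by move=> pz; rewrite /cX !mem_cat; apply/orP; right; apply/orP; left; apply: map_f. Qed.
Lemma cX_in3 p : p \in zip X vs -> [:: (p.1, true); (p.2, true)] \in G.
Proof. by move=> pz; rewrite /cX !mem_cat; apply/orP; right; apply/orP; right; apply/orP; left; apply: map_f. Qed.
Lemma cX_in4 : rcons [seq (v, false) | v <- vs] (a, true) \in G.
Proof. by rewrite /cX !mem_cat !inE eqxx !orbT. Qed.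
Lemma cX_in5 : rcons [seq (v, false) | v <- vs] (b, true) \in G.
Proof. by rewrite /cX !mem_cat !inE eqxx !orbT. Qed.

Lemma Gne : forall C, C \in G -> C != [::].
Proof.
move=> C /cX_cases [[g _ ->]|[p _ ->]|[p _ ->]|[->|->]] //; first by case: g.
all: by case: vs.
Qed.


Definition assigned (S : seq lit) x := ((x, true) \in S) || ((x, false) \in S).
Definition Good (S : seq lit) := (forall l, l \in S -> l.1 \in X ++ Y) /\ scons S.

Definition Q (S : seq lit) m :=
  m \in S \/ exists x v, [/\ (x, v) \in zip X vs, assigned S x & m = (v, true)].

Lemma aXY : a \notin X ++ Y.
Proof. apply/negP => /XYW /Wnot [/eqP]; by []. Qed.
Lemma bXY : b \notin X ++ Y.
Proof. apply/negP => /XYW /Wnot [_ /eqP]; by []. Qed.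
Lemma vXY v : v \in vs -> v \notin X ++ Y.
Proof. move=> vv; apply/negP => /XYW /Wnot [_ _]; by rewrite vv. Qed.
Lemma xvs x : x \in X -> x \notin vs.
Proof. by move=> /XW /Wnot []. Qed.

Lemma notS S v c : Good S -> v \notin X ++ Y -> (v, c) \notin S.
Proof. by move=> [H _] nv; apply/negP => /H /=; apply/negP. Qed.

Lemma Q_a S c : Good S -> ~ Q S (a, c).
Proof.
move=> gS [H|[x [v [H1 _ [E _]]]]]; first by move: H; rewrite (negbTE (notS _ gS aXY)).
by have [_ ] := zip_mem H1; rewrite -E (negbTE fav).
Qed.
Lemma Q_b S c : Good S -> ~ Q S (b, c).
Proof.
move=> gS [H|[x [v [H1 _ [E _]]]]]; first by move: H; rewrite (negbTE (notS _ gS bXY)).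
by have [_ ] := zip_mem H1; rewrite -E (negbTE fbv).
Qed.
Lemma Q_vf S v : Good S -> v \in vs -> ~ Q S (v, false).
Proof.
move=> gS vv [H|[x [v' [_ _ []]]]] //; by move: H; rewrite (negbTE (notS _ gS (vXY vv))).
Qed.
Lemma Q_x S x c : Good S -> x \in X -> Q S (x, c) -> (x, c) \in S.
Proof.
move=> gS xX [//|[x' [v [H1 _ [E _]]]]].
by have [_ ] := zip_mem H1; rewrite -E (negbTE (xvs xX)).
Qed.

Lemma C1_closed S x0 : Good S -> x0 \in X -> ~~ assigned S x0 -> forall m, D S m -> Q S m.
Proof.
move=> gS x0X nx0 m; elim=> [k kS|C m' HC Hm _ IH]; first by left.
case: (cX_cases HC) => [[g gF EC]|[[x v] pz EC]|[[x v] pz EC]|[EC|EC]]; rewrite {}EC /= in Hm IH.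
- case: (eqVneq m' (a, false)) => [Em|Em].
    exfalso; apply: (Q_b (c:=true) gS); apply: (IH (b, false)).
      by rewrite mem_cat !inE eqxx !orbT.
    by rewrite Em xpair_eqE eq_sym (negbTE fab).
  exfalso; apply: (Q_a (c:=true) gS); apply: (IH (a, false)) => //.
  by rewrite mem_cat !inE eqxx !orbT.
  by rewrite eq_sym.
- have [xX vv] := zip_mem pz.
  move: Hm; rewrite !inE => /orP [/eqP Em|/eqP Em].
    exfalso; apply: (Q_vf gS vv); apply: (IH (v, true)); first by rewrite !inE eqxx orbT.
    by rewrite Em xpair_eqE andbF.
  have := IH (x, false); rewrite !inE eqxx Em xpair_eqE andbF /= => /(_ isT isT) /= H.
  right; exists x, v; split => //; rewrite /assigned.
  by rewrite (Q_x gS xX H).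
- have [xX vv] := zip_mem pz.
  move: Hm; rewrite !inE => /orP [/eqP Em|/eqP Em].
    exfalso; apply: (Q_vf gS vv); apply: (IH (v, true)); first by rewrite !inE eqxx orbT.
    rewrite Em xpair_eqE; apply/negP => /andP [/eqP E _]; by move: (xvs xX); rewrite -E vv.
  have := IH (x, true); rewrite !inE eqxx Em xpair_eqE.
  have -> : (x == v) = false by apply/negP => /eqP E; move: (xvs xX); rewrite E vv.
  move=> /(_ isT isT) /= H.
  right; exists x, v; split => //; rewrite /assigned.
  by rewrite (Q_x gS xX H) orbT.
- move: Hm; rewrite mem_rcons inE => /orP [/eqP Em|/mapP [v vv Em]].
    have [v0 z0] := zip_ex x0X; have [_ v0v] := zip_mem z0.
    have := IH (v0, false); rewrite mem_rcons inE map_f // orbT Em xpair_eqE andbF.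
    move=> /(_ isT isT) [H|[x [v [H1 H2 [E]]]]].
      by move: H; rewrite (negbTE (notS _ gS (vXY v0v))).
    by rewrite -E in H1; rewrite (zip_inj1 H1 z0) in H2; rewrite H2 in nx0.
  exfalso; apply: (Q_a gS); apply: (IH (a, true)); first by rewrite mem_rcons mem_head.
  by rewrite Em xpair_eqE andbF.
- move: Hm; rewrite mem_rcons inE => /orP [/eqP Em|/mapP [v vv Em]].
    have [v0 z0] := zip_ex x0X; have [_ v0v] := zip_mem z0.
    have := IH (v0, false); rewrite mem_rcons inE map_f // orbT Em xpair_eqE andbF.
    move=> /(_ isT isT) [H|[x [v [H1 H2 [E]]]]].
      by move: H; rewrite (negbTE (notS _ gS (vXY v0v))).
    by rewrite -E in H1; rewrite (zip_inj1 H1 z0) in H2; rewrite H2 in nx0.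
  exfalso; apply: (Q_b gS); apply: (IH (b, true)); first by rewrite mem_rcons mem_head.
  by rewrite Em xpair_eqE andbF.
Qed.


Lemma C1_cons S x0 : Good S -> x0 \in X -> ~~ assigned S x0 -> consis G S.
Proof.
move=> gS x0X nx0 m /(C1_closed gS x0X nx0) H1 /(C1_closed gS x0X nx0) H2.
case: H1 => [m1|[x [v [z1 _ E1]]]]; case: H2 => [m2|[x' [v' [z2 _ E2]]]].
- by move: (gS.2 _ m1); rewrite m2.
- have [_ v'v] := zip_mem z2.
  by move: m1; rewrite -(negK m) E2 /= (negbTE (notS _ gS (vXY v'v))).
- have [_ vv] := zip_mem z1.
  by move: m2; rewrite E1 /= (negbTE (notS _ gS (vXY vv))).
- by move: E2; rewrite E1.
Qed.

Lemma C1_occ S x : Good S -> x \in X -> ~~ assigned S x -> occ G S x.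
Proof.
move=> gS xX nx; have [v z] := zip_ex xX; have [_ vv] := zip_mem z.
have nQ : forall c, ~ Q S (x, c).
  move=> c /(Q_x gS xX) H; move/negP: nx; apply; rewrite /assigned.
  by case: c H => ->; rewrite ?orbT.
exists [:: (x, false); (v, true)]; first exact: (cX_in2 z).
split.
  move=> m; rewrite !inE => /orP [/eqP->|/eqP->] /(C1_closed gS xX nx).
    exact: nQ.
  case=> [H|[x' [v' [z' H2 [E]]]]].
    by move: H; rewrite (negbTE (notS _ gS (vXY vv))).
  by rewrite -E in z'; rewrite (zip_inj1 z' z) in H2; rewrite H2 in nx.
exists (x, false); first exact: mem_head.
by split => // /(C1_closed gS xX nx); apply: nQ.
Qed.

Definition U (S : seq lit) := [seq x <- X | ~~ assigned S x].

Lemma uU S : uniq (U S). Proof. exact: filter_uniq uX. Qed.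

Lemma U_rcons S x c : U (rcons S (x, c)) = filter (predC1 x) (U S).
Proof.
rewrite /U -filter_predI; apply: eq_filter => y /=.
rewrite /assigned !mem_rcons !inE !xpair_eqE.
by case: (eqVneq y x) => [->|yx] /=; case: c; rewrite ?orbT ?andbF.
Qed.

Lemma U_rem S x c : x \in U S -> U (rcons S (x, c)) = rem x (U S).
Proof. by move=> _; rewrite U_rcons rem_filter // uU. Qed.

Lemma U_notX S x c : x \notin X -> U (rcons S (x, c)) = U S.
Proof.
move=> nx; rewrite U_rcons; apply/all_filterP/allP => y; rewrite mem_filter => /andP [_ yX] /=.
by apply/eqP => E; move: nx; rewrite -E yX.
Qed.

Lemma U_mem S S' : S =i S' -> U S = U S'.
Proof. by move=> E; apply: eq_filter => x; rewrite /assigned !E. Qed.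

Lemma U_nil S : U S = [::] -> forall x, x \in X -> assigned S x.
Proof.
move=> E x xX; apply/negPn/negP => nx.
have : x \in U S by rewrite mem_filter nx xX.
by rewrite E.
Qed.

Lemma U_nil0 : U [::] = X.
Proof. by rewrite /U; apply/all_filterP/allP => x _; rewrite /assigned !in_nil. Qed.

Lemma Good_child S x c : Good S -> x \in X ++ Y -> occ G S x -> Good (rcons S (x, c)).
Proof.
move=> [g1 g2] xB o; split; last exact: scons_child g2 o.
by move=> l; rewrite mem_rcons inE => /orP [/eqP->|/g1].
Qed.

Lemma occ_notin S x c : occ G S x -> (x, c) \notin S.
Proof. by move=> o; apply/negP => H; exact: (occ_unassigned (b:=c) o (@upd_init _ _ _ H)). Qed.

Lemma occ_nassigned S x : occ G S x -> ~~ assigned S x.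
Proof. by move=> o; rewrite /assigned negb_or !occ_notin. Qed.

Lemma LabY T S : (forall x, x \in X -> assigned S x) -> dm G (X ++ Y) S T -> labels_in Y T.
Proof.
elim: T S => [//|z T1 IH1 T2 IH2] S all /dm_node_inv [c zB o H1 H2] /=.
have zX : z \notin X by apply/negP => /all; apply/negP; apply: occ_nassigned.
have -> : z \in Y by move: zB; rewrite mem_cat (negbTE zX).
have allc : forall c0, forall x, x \in X -> assigned (rcons S (z, c0)) x.
  by move=> c0 x /all; rewrite /assigned !mem_rcons !inE => /orP [->|->]; rewrite ?orbT.
by rewrite (IH1 _ (allc false) H1) (IH2 _ (allc true) H2).
Qed.


Notation DM := (dm (cX F X a b vs) (X ++ Y)).

Lemma xy_nodeP (s : seq nat) x T1 T2 : s != [::] ->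
  xy_shape s Y (Node x T1 T2) = [&& x \in s, xy_shape (rem x s) Y T1 & xy_shape (rem x s) Y T2].
Proof. by case: s => // h t _ /=; rewrite andbA. Qed.

Lemma xy_nil T : xy_shape [::] Y T = labels_in Y T.
Proof. by case: T. Qed.

Lemma ne_of (s : seq nat) x : x \in s -> s != [::].
Proof. by case: s. Qed.

Lemma xy_leaf (s : seq nat) : s != [::] -> xy_shape s Y Leaf = false.
Proof. by case: s. Qed.

Lemma rem_comm (s : seq nat) x y : uniq s -> rem x (rem y s) = rem y (rem x s).
Proof.
move=> us; rewrite !rem_filter ?filter_uniq // -!filter_predI.
by apply: eq_filter => z /=; rewrite andbC.
Qed.

Lemma Good_rcons S x c : Good S -> x \in X ++ Y -> ~~ assigned S x -> Good (rcons S (x, c)).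
Proof.
move=> [g1 g2] xB nx; split.
  by move=> l; rewrite mem_rcons inE => /orP [/eqP->|/g1].
move: nx; rewrite /assigned negb_or => /andP [n1 n2].
move=> k; rewrite !mem_rcons !inE => /orP [/eqP->|kS].
  by rewrite neg_neq /=; case: c; rewrite ?n1 ?n2.
rewrite negb_or (negbTE (g2 _ kS)) andbT; apply/negP => /eqP E.
move: kS; rewrite -(negK k) E /neg /=; clear E.
by case: c; rewrite ?(negbTE n1) ?(negbTE n2).
Qed.

Lemma UX S x : x \in U S -> x \in X /\ ~~ assigned S x.
Proof. by rewrite mem_filter => /andP [-> ->]. Qed.

Lemma XB x : x \in X -> x \in X ++ Y.
Proof. by rewrite mem_cat => ->. Qed.

Lemma reroot T : forall S, Good S -> DM S T -> xy_shape (U S) Y T -> forall x, x \in U S ->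
  exists E1, exists E2, [/\ DM S (Node x E1 E2), xy_shape (U S) Y (Node x E1 E2)
                            & tree_size (Node x E1 E2) <= tree_size T].
Proof.
elim: T => [|x' T1 IH1 T2 IH2] S gS H sh x xU.
  have ne : U S != [::] by apply/negP => /eqP E; rewrite E in xU.
  by rewrite xy_leaf in sh.
have ne : U S != [::] by apply/negP => /eqP E; rewrite E in xU.
move: sh; rewrite xy_nodeP // => /and3P [x'U sh1 sh2].
case/dm_node_inv: (H) => c x'B o H1 H2.
case: (eqVneq x' x) => [E|neq].
  by exists T1, T2; rewrite -E; split => //; rewrite xy_nodeP // x'U sh1 sh2.
have [xX nxa] := UX xU; have [x'X nx'a] := UX x'U.
have gS1 := Good_rcons false gS x'B nx'a; have gS2 := Good_rcons true gS x'B nx'a.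
have U1 := U_rem false x'U; have U2 := U_rem true x'U.
have xU' : x \in rem x' (U S) by rewrite (mem_rem_uniq _ (uU S)) inE xU andbT eq_sym.
rewrite -U1 in sh1 xU'; have [E11 [E12 [D1 s1 z1]]] := IH1 _ gS1 H1 sh1 x xU'.
rewrite U1 -U2 in xU'; rewrite -U2 in sh2.
have [E21 [E22 [D2 s2 z2]]] := IH2 _ gS2 H2 sh2 x xU'.
exists (Node x' E11 E21), (Node x' E12 E22).
have oS : occ G S x := C1_occ gS xX nxa.
have xB := XB xX.
have x'U3 : forall c0, x' \in U (rcons S (x, c0)).
  by move=> c0; rewrite U_rem // (mem_rem_uniq _ (uU S)) inE x'U andbT.
have Hch : forall c0, DM (rcons S (x, c0)) (Node x' (if c0 then E12 else E11) (if c0 then E22 else E21)).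
  move=> c0; have gR := Good_rcons c0 gS xB nxa.
  have [_ nx'R] := UX (x'U3 c0).
  apply: dm_node.
  - exact: C1_cons gR x'X nx'R.
  - exact: x'B.
  - exact: C1_occ gR x'X nx'R.
  - case/dm_node_inv: D1 => _ _ _ F1 F2.
    by clear gR nx'R; case: c0 => /=; [apply: dm_mem F2 | apply: dm_mem F1]; apply: rcons_swap.
  - case/dm_node_inv: D2 => _ _ _ F1 F2.
    by clear gR nx'R; case: c0 => /=; [apply: dm_mem F2 | apply: dm_mem F1]; apply: rcons_swap.
split.
- apply: dm_node.
  + exact: C1_cons gS xX nxa.
  + exact: xB.
  + exact: oS.
  + exact: (Hch false).
  + exact: (Hch true).
- have xin1 : x \in U (rcons S (x', false)) by rewrite U1 (mem_rem_uniq _ (uU S)) inE xU andbT eq_sym.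
  have xin2 : x \in U (rcons S (x', true)) by rewrite U2 (mem_rem_uniq _ (uU S)) inE xU andbT eq_sym.
  move: s1; rewrite (xy_nodeP _ _ _ (ne_of xin1)) U1 => /and3P [_ s11 s12].
  move: s2; rewrite (xy_nodeP _ _ _ (ne_of xin2)) U2 => /and3P [_ s21 s22].
  have x'in : x' \in rem x (U S) by rewrite (mem_rem_uniq _ (uU S)) inE x'U andbT neq.
  rewrite (xy_nodeP _ _ _ (ne_of xU)) xU andTb !(xy_nodeP _ _ _ (ne_of x'in)) x'in !andTb.
  by rewrite (rem_comm x' x (uU S)) s11 s12 s21 s22.
- move: z1 z2 => /= z1 z2; clear -z1 z2; lia.
Qed.

Lemma dm_derived S l T : D S l -> DM (rcons S l) T -> DM S T.
Proof.
move=> Dl; apply: dm_Deq => k; split.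
  by apply: D_trans => j; rewrite mem_rcons inE => /orP [/eqP->|/upd_init].
by apply: D_mono => j; rewrite mem_rcons inE orbC => ->.
Qed.

Lemma merge_base S A B0 y : Good S -> U S = [::] -> y \in Y -> ~~ assigned S y ->
  DM (rcons S (y, false)) A -> labels_in Y A -> DM (rcons S (y, true)) B0 -> labels_in Y B0 ->
  exists C, [/\ DM S C, labels_in Y C & tree_size C <= (tree_size A + tree_size B0).+1].
Proof.
move=> gS US yY ny HA lA HB lB.
case: (classic (consis G S)) => c; last first.
  by exists Leaf; split => //; apply: dm_leaf.
case: (classic (D S (y, true))) => d1.
  exists B0; split => //; first exact: dm_derived d1 HB.
  by rewrite -addSn leq_addl.
case: (classic (D S (y, false))) => d2.
  exists A; split => //; first exact: dm_derived d2 HA.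
  by rewrite -addnS leq_addr.
have yB : y \in X ++ Y by rewrite mem_cat yY orbT.
case: (classic (occ G S y)) => o.
  by exists (Node y A B0); split => //=; [apply: dm_node | rewrite yY lA lB].
exists A; split => //; last by rewrite -addnS leq_addr.
have nocc : forall C, C \in G -> (forall m, m \in C -> ~ D S m) -> forall m, m \in C -> m.1 <> (y, false).1.
  move=> C HC H m mC /= my; apply: o; exists C => //; split => //; exists m => //; split => //.
  by case: (same_var (l := (y, true)) my) => ->; rewrite /neg /=.
apply: (irr_dm (l := (y, false)) d2 _ nocc (S' := S)) => //.
  by move=> m mS; left.
Qed.

Lemma merge A : forall S B0 y, Good S -> y \in Y -> ~~ assigned S y ->
  DM (rcons S (y, false)) A -> xy_shape (U S) Y A -> DM (rcons S (y, true)) B0 -> xy_shape (U S) Y B0 ->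
  exists C, [/\ DM S C, xy_shape (U S) Y C & tree_size C <= (tree_size A + tree_size B0).+1].
Proof.
have yB : forall y, y \in Y -> y \in X ++ Y by move=> y yY; rewrite mem_cat yY orbT.
elim: A => [|x A1 IH1 A2 IH2] S B0 y gS yY ny HA shA HB shB.
  have [US|ne] := eqVneq (U S) [::].
    by move: shA shB; rewrite US !xy_nil => shA shB; have [C [? ? ?]] := merge_base gS US yY ny HA shA HB shB; exists C; rewrite xy_nil.
  by rewrite xy_leaf in shA.
have [US|ne] := eqVneq (U S) [::].
  by move: shA shB; rewrite US !xy_nil => shA shB; have [C [? ? ?]] := merge_base gS US yY ny HA shA HB shB; exists C; rewrite xy_nil.
move: (shA); rewrite (xy_nodeP _ _ _ ne) => /and3P [xU shA1 shA2].
have [xX nxa] := UX xU.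
have yX := YnotX yY.
have xy : x != y by apply/eqP => E; move: yX; rewrite -E xX.
have gSy := Good_rcons true gS (yB y yY) ny.
have Uy : U (rcons S (y, true)) = U S by apply: U_notX.
rewrite -Uy in shB xU.
have [B1 [B2 [DB sB zB]]] := reroot gSy HB shB xU.
rewrite Uy in xU sB.
move: sB; rewrite (xy_nodeP _ _ _ ne) => /and3P [_ shB1 shB2].
case/dm_node_inv: DB => _ _ _ DB1 DB2.
case/dm_node_inv: HA => _ _ _ DA1 DA2.
have xB := XB xX.
have nyc : forall c, ~~ assigned (rcons S (x, c)) y.
  move=> c; apply/negP; rewrite /assigned !mem_rcons !inE !xpair_eqE.
  move=> /orP [/orP [/andP [/eqP E _]|H]|/orP [/andP [/eqP E _]|H]];
    try (by move: xy; rewrite E eqxx); move/negP: ny; apply; by rewrite /assigned H ?orbT.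
have Ux : forall c, U (rcons S (x, c)) = rem x (U S) by move=> c; apply: U_rem.
have sA1 : xy_shape (U (rcons S (x, false))) Y A1 by rewrite Ux.
have sA2 : xy_shape (U (rcons S (x, true))) Y A2 by rewrite Ux.
have sB1 : xy_shape (U (rcons S (x, false))) Y B1 by rewrite Ux.
have sB2 : xy_shape (U (rcons S (x, true))) Y B2 by rewrite Ux.
have [P1 [DP1 sP1 zP1]] := IH1 (rcons S (x, false)) B1 y (Good_rcons false gS xB nxa) yY (nyc false)
  (dm_mem (rcons_swap _ _ _) DA1) sA1 (dm_mem (rcons_swap _ _ _) DB1) sB1.
have [P2 [DP2 sP2 zP2]] := IH2 (rcons S (x, true)) B2 y (Good_rcons true gS xB nxa) yY (nyc true)
  (dm_mem (rcons_swap _ _ _) DA2) sA2 (dm_mem (rcons_swap _ _ _) DB2) sB2.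
exists (Node x P1 P2); split.
- apply: dm_node => //; [exact: C1_cons gS xX nxa | exact: C1_occ gS xX nxa].
- by rewrite (xy_nodeP _ _ _ ne) xU; rewrite !Ux in sP1 sP2; rewrite sP1 sP2.
- move: zB zP1 zP2 => /= zB zP1 zP2; clear -zB zP1 zP2; lia.
Qed.

Lemma mainM T : forall S, Good S -> DM S T ->
  exists T', [/\ DM S T', xy_shape (U S) Y T' & tree_size T' <= tree_size T].
Proof.
elim: T => [|z T1 IH1 T2 IH2] S gS H.
  have [US|ne] := eqVneq (U S) [::]; first by exists Leaf; rewrite US.
  have [x0 xU] : exists x0, x0 \in U S by case: (U S) ne => // u us _; exists u; exact: mem_head.
  have [xX nxa] := UX xU.
  by case: (dm_leaf_inv H); apply: C1_cons gS xX nxa.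
have [US|ne] := eqVneq (U S) [::].
  exists (Node z T1 T2); split => //; rewrite US xy_nil.
  exact: (LabY (U_nil US) H).
case/dm_node_inv: (H) => c zB o H1 H2.
have nz := occ_nassigned o.
have [T1' [D1 s1 z1]] := IH1 _ (Good_rcons false gS zB nz) H1.
have [T2' [D2 s2 z2]] := IH2 _ (Good_rcons true gS zB nz) H2.
case: (boolP (z \in X)) => zX.
  have zU : z \in U S by rewrite mem_filter zX nz.
  exists (Node z T1' T2'); split.
  - by apply: dm_node.
  - by rewrite (xy_nodeP _ _ _ ne) zU; rewrite !(U_rem _ zU) in s1 s2; rewrite s1 s2.
  - by move: z1 z2 => /= z1 z2; clear -z1 z2; lia.
have zY : z \in Y by move: zB; rewrite mem_cat (negbTE zX).
rewrite (U_notX _ _ zX) in s1; rewrite (U_notX _ _ zX) in s2.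
have [C [DC sC zC]] := merge gS zY nz D1 s1 D2 s2.
exists C; split => //; move: zC z1 z2 => /= zC z1 z2; clear -zC z1 z2; lia.
Qed.

Lemma zip_ex2 v : v \in vs -> exists x, (x, v) \in zip X vs.
Proof.
move=> vv; exists (nth 0 X (index v vs)); apply/zipP; exists (index v vs).
  by rewrite -Hsz index_mem.
by rewrite nth_index.
Qed.

Lemma count_lt (p q : pred nat) (s : seq nat) : (forall v, q v -> p v) ->
  (exists2 z, z \in s & p z && ~~ q z) -> count q s < count p s.
Proof.
move=> qp; elim: s => [[z]|v s IH [z]] //; rewrite inE => /orP [/eqP->|zs] pz /=.
  case/andP: pz => -> /negbTE ->; rewrite add0n add1n ltnS.
  by apply: sub_count => w; apply: qp.
rewrite -addnS; apply: leq_add; last by apply: IH; exists z.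
by case: (boolP (q v)) => // /qp ->.
Qed.

Definition measure (S : seq lit) := count (fun v => ~~ assigned S v) (X ++ Y).

Hypothesis Hv : all (fun v => v \in X ++ Y ++ Z) (vars F).
Hypothesis Hunsat : unsat F.
Hypothesis Hz : forall alpha : nat -> bool,
     let I := [seq (v, alpha v) | v <- X ++ Y] in
     forall z, z \in Z -> exists p : bool, up_derived (restrict F I) I (z, p).

Lemma varsW g k : g \in F -> k \in g -> k.1 \in W.
Proof. by move=> gF kg; apply: (allP Hv); apply/mem_vars; exists g => //; exists k. Qed.

Lemma prog S : Good S -> consis G S -> exists2 z, z \in X ++ Y & occ G S z.
Proof.
move=> gS c.
case: (boolP (has (fun x => ~~ assigned S x) X)) => [/hasP [x xX nx]|hn].
  by exists x; [exact: XB | exact: C1_occ gS xX nx].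
apply: NNPP => Hno.
have H : forall z, z \in X ++ Y -> ~ occ G S z by move=> z zB o; apply: Hno; exists z.
have allX : forall x, x \in X -> assigned S x.
  by move=> x xX; move/hasPn: hn => /(_ x xX); rewrite negbK.
have F1 : forall v, v \in vs -> D S (v, true).
  move=> v vv; have [x z] := zip_ex2 vv; have [xX _] := zip_mem z.
  case/orP: (allX x xX) => xS.
    apply: (upd_step (cX_in2 z)); first by rewrite !inE eqxx orbT.
    move=> l'; rewrite !inE => /orP [/eqP->|/eqP->] //; last by rewrite eqxx.
    by move=> _; apply: upd_init.
  apply: (upd_step (cX_in3 z)); first by rewrite !inE eqxx orbT.
  move=> l'; rewrite !inE => /orP [/eqP->|/eqP->] //; last by rewrite eqxx.
  by move=> _; apply: upd_init.
have F2 : D S (a, true).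
  apply: (upd_step cX_in4); first by rewrite mem_rcons mem_head.
  move=> l'; rewrite mem_rcons inE => /orP [/eqP->|/mapP [v vv ->]]; first by rewrite eqxx.
  by move=> _; apply: F1.
have F3 : D S (b, true).
  apply: (upd_step cX_in5); first by rewrite mem_rcons mem_head.
  move=> l'; rewrite mem_rcons inE => /orP [/eqP->|/mapP [v vv ->]]; first by rewrite eqxx.
  by move=> _; apply: F1.
pose alpha v := if excluded_middle_informative (D S (v, true)) then true else false.
have alphaT : forall v, alpha v = true <-> D S (v, true).
  by move=> v; rewrite /alpha; case: excluded_middle_informative.
have F4 : forall v c0, D S (v, c0) -> alpha v = c0.
  move=> v [] d; first by apply/alphaT.
  by apply/negbTE/negP => /alphaT d'; exact: c d' d.
set I := [seq (v, alpha v) | v <- X ++ Y].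
have memI : forall k, k \in I -> k.1 \in X ++ Y /\ k.2 = alpha k.1.
  by move=> k /mapP [v vB ->].
have inI : forall w, w \in X ++ Y -> (w, alpha w) \in I.
  by move=> w wB; apply: (map_f (fun v => (v, alpha v))).
have nocc : forall (g : clause) (k : lit), g \in F -> k \in g -> (forall j, j \in g -> ~ D S j) ->
    k.1 \in X ++ Y -> D S (neg k).
  move=> g k gF kg nj kB; apply: NNPP => nd; apply: (H _ kB).
  exists (g ++ [:: (a, false); (b, false)]); first exact: cX_in1.
  split; last by exists k => //; rewrite mem_cat kg.
  move=> m; rewrite mem_cat !inE => /orP [/nj //|/orP [/eqP->|/eqP->]] d.
    exact: c F2 d.
  exact: c F3 d.
have F5 : forall m, up_derived (restrict F I) I m -> m \in I \/ D S m.
  move=> m; elim=> [k kI|C m' HC Hm _ IH]; first by left.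
  right; move/mem_restrict: HC => [g gF [nI EC]].
  have Cvar : forall k, k \in C -> k.1 \notin X ++ Y.
    move=> k; rewrite EC mem_filter => /andP [nk kg]; apply/negP => kB.
    move/hasPn: nI => /(_ k kg); case: k kB nk kg => w [] /= kB nk kg; rewrite /neg /= in nk;
      case E: (alpha w) (inI w kB) => H0; rewrite ?H0 //; by rewrite ?E in nk; rewrite H0 in nk.
  have CI : forall k, k \in g -> k.1 \notin X ++ Y -> k \in C.
    move=> k kg kB; rewrite EC mem_filter kg andbT; apply/negP => /memI [/= kB' _].
    by move: kB; rewrite kB'.
  have IH' : forall k, k \in C -> k != m' -> D S (neg k).
    move=> k kC km; case: (IH k kC km) => // /memI [kB _].
    by move: (Cvar _ kC); rewrite kB.
  have m'g : m' \in g by move: Hm; rewrite EC mem_filter => /andP [].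
  case: (classic (exists2 j, j \in g & D S j)) => [[j jg dj]|nj].
    case: (boolP (j.1 \in X ++ Y)) => jB.
      case: j jg dj jB => w c0 jg dj /= jB.
      by move/hasPn: nI => /(_ _ jg) /=; rewrite -(F4 _ _ dj) inI.
    case: (eqVneq j m') => [<-|jm] //.
    by exfalso; apply: (c j) => //; apply: IH' => //; apply: CI.
  have nj' : forall j, j \in g -> ~ D S j by move=> j jg dj; apply: nj; exists j.
  apply: (upd_step (cX_in1 gF)); first by rewrite mem_cat m'g.
  move=> l'; rewrite mem_cat !inE => /orP [l'g|/orP [/eqP->|/eqP->]] // l'm.
  case: (boolP (l'.1 \in X ++ Y)) => l'B; first exact: (nocc g).
  by apply: IH' => //; apply: CI.
have F6 : forall z, z \in Z -> exists c0, D S (z, c0).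
  move=> z zZ; have [p Hp] := Hz alpha zZ; exists p.
  case: (F5 _ Hp) => // /memI [/= zB _]; by move: (ZnotXY zZ); rewrite zB.
move/negP: (Hunsat alpha); apply; apply/allP => g gF; apply: NNPP => ns.
have nk : forall k, k \in g -> ~ D S k.
  move=> [w c1] kg dk; apply: ns; apply/hasP; exists (w, c1) => //=; by rewrite (F4 _ _ dk).
have dn : forall k, k \in g -> D S (neg k).
  move=> k kg; apply: NNPP => nd.
  have kW := varsW gF kg.
  case: (boolP (k.1 \in X ++ Y)) => kB; first by apply: nd; apply: (nocc g).
  have kZ : k.1 \in Z by move: kW; rewrite catA mem_cat (negbTE kB).
  have [c0 d0] := F6 _ kZ.
  case: (same_var (l := k) (erefl : (k.1, c0).1 = k.1)) => E; rewrite E in d0.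
    exact: nk kg d0.
  exact: nd d0.
apply: (c (a, true)) => //.
apply: (upd_step (cX_in1 gF)); first by rewrite mem_cat !inE eqxx orbT.
move=> l'; rewrite mem_cat !inE => /orP [l'g|/orP [/eqP->|/eqP->]] //.
by move=> _; apply: dn.
Qed.

Lemma exists_dm n S : Good S -> measure S <= n -> exists T, DM S T.
Proof.
elim: n S => [|n IH] S gS ms; case: (classic (consis G S)) => c;
  try by exists Leaf; apply: dm_leaf.
- have [z zB o] := prog gS c; move: ms; rewrite leqn0 => /eqP ms.
  have : 0 < measure S.
    rewrite /measure -has_count; apply/hasP; exists z => //; exact: occ_nassigned o.
  by rewrite ms.
- have [z zB o] := prog gS c.
  have nz := occ_nassigned o.
  have lt : forall c0, measure (rcons S (z, c0)) < measure S.
    move=> c0; apply: count_lt.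
      by move=> v; apply: contra; rewrite /assigned !mem_rcons !inE => /orP [->|->]; rewrite ?orbT.
    exists z => //; rewrite nz /= negbK /assigned !mem_rcons !inE !xpair_eqE eqxx.
    by case: c0 lt; rewrite /= ?orbT.
  have [T1 H1] := IH _ (Good_rcons false gS zB nz) (leq_trans (lt false) ms).
  have [T2 H2] := IH _ (Good_rcons true gS zB nz) (leq_trans (lt true) ms).
  by exists (Node z T1 T2); apply: dm_node.
Qed.

End CX.

Lemma min_ex (P : nat -> Prop) : (exists n, P n) -> exists n, P n /\ forall m, P m -> n <= m.
Proof.
move=> [n Pn]; elim/ltn_ind: n Pn => n IH Pn.
case: (classic (exists m, m < n /\ P m)) => [[m [lt Pm]]|H]; first exact: IH m lt Pm.
exists n; split => // m Pm; rewrite leqNgt; apply/negP => lt; apply: H; by exists m.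
Qed.

Unset Implicit Arguments.
Theorem theorem5 (F : cnf) (X Y Z : seq nat) (a b : nat) (vs : seq nat) :
  uniq (X ++ Y ++ Z ++ a :: b :: vs) ->
  size vs = size X ->
  all (fun v => v \in X ++ Y ++ Z) (vars F) ->
  unsat F ->
  (forall alpha : nat -> bool,
     let I := [seq (v, alpha v) | v <- X ++ Y] in
     forall z, z \in Z -> exists p : bool, up_derived (restrict F I) I (z, p)) ->
  exists T : tree,
    [/\ dmst (X ++ Y) (cX F X a b vs) T,
        (forall T', dmst (X ++ Y) (cX F X a b vs) T' -> tree_size T <= tree_size T')
      & xy_shape X Y T].
Proof.
move=> Hu Hsz Hv Hun Hz.
have hE : forall T, dmst (X ++ Y) (cX F X a b vs) T <-> dm (cX F X a b vs) (X ++ Y) [::] T.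
  move=> T; rewrite -{1}(restrict_nilI (cX F X a b vs)).
  by apply: (dmst_dm (@Gne F X a b vs)).
have g0 : Good X Y [::] by split.
have [n0 [[T0 [D0 E0]] min0]] : exists n, (exists T, dm (cX F X a b vs) (X ++ Y) [::] T /\ tree_size T = n)
     /\ forall m, (exists T, dm (cX F X a b vs) (X ++ Y) [::] T /\ tree_size T = m) -> n <= m.
  apply: min_ex; have [T HT] := exists_dm Hu Hsz Hv Hun Hz g0 (leqnn _).
  by exists (tree_size T), T.
have [T' [D' s' z']] := mainM Hu Hsz g0 D0.
exists T'; split.
- exact/hE.
- move=> T1 /hE H1; apply: leq_trans z' _; rewrite E0; apply: min0; by exists T1.
- by move: s'; rewrite U_nil0.
Qed.
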